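(* Let $\ell$ satisfy Assumption 1 and let $W(t)$, $t\ge0$, be a gradient flow trajectory whose initialization satisfies Assumption 2. Then for every $R>0$ there is a constant $\epsilon(R)>0$ such that for every $t\ge 1$ with $W(t)\in B(R)$ we have $\left\|\frac{\partial\mathcal{R}}{\partial W_1}(W(t))\right\|_F\ge\epsilon(R)$. Consequently, for every $R>0$ the set $\{t\ge 0: W(t)\in B(R)\}$ has finite Lebesgue measure, and $t\mapsto\max_{1\le k\le L}\|W_k(t)\|_F$ is unbounded.
   Context: Setting: data $(x_i,y_i)_{i=1}^n$ with $x_i\in\mathbb{R}^d$, $\|x_i\|\le 1$, $y_i\in\{-1,+1\}$; put $z_i:=y_ix_i$. The data are linearly separable, i.e. some unit vector $u$ has $\langle u,z_i\rangle>0$ for all $i$. Let $\gamma:=\max_{\|u\|=1}\min_{i}\langle u,z_i\rangle>0$ and let $\bar u$ be the unique unit vector attaining it. A depth-$L$ linear network is $W=(W_L,\dots,W_1)$ with $W_k\in\mathbb{R}^{d_k\times d_{k-1}}$, $d_0=d$, $d_L=1$, and $w_{\mathrm{prod}}:=(W_L\cdots W_1)^\top\in\mathbb{R}^d$. The risk is $\mathcal{R}(W)=\frac1n\sum_{i=1}^n\ell(\langle w_{\mathrm{prod}},z_i\rangle)$. For $R>0$, $B(R):=\{W:\max_{1\le k\le L}\|W_k\|_F\le R\}$. Assumption 1: $\ell:\mathbb{R}\to\mathbb{R}$ is continuously differentiable, $\ell'(x)<0$ for all $x$, $\lim_{x\to-\infty}\ell(x)=\infty$ and $\lim_{x\to\infty}\ell(x)=0$.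 Gradient flow: a $C^1$ curve $W(t)$, $t\in[0,\infty)$, with $\frac{d}{dt}W(t)=-\nabla\mathcal{R}(W(t))$. Assumption 2: $\nabla\mathcal{R}(W(0))\neq 0$ and $\mathcal{R}(W(0))\le \ell(0)$. *)

(* Defs.v *)
From Stdlib Require Import Reals Lra Lia.
Open Scope R_scope.

Fixpoint fsum (n : nat) (f : nat -> R) : R :=
  match n with
  | O => 0
  | S m => fsum m f + f m
  end.

(* Network parameters: W k a b is entry (a,b) of layer matrix W_k (k = 1..L),
   a < dims k, b < dims (k-1).  Entries outside these ranges are irrelevant. *)
Definition params := nat -> nat -> nat -> R.

Definition valid_index (L : nat) (dims : nat -> nat) (k a b : nat) : Prop :=
  (1 <= k <= L)%nat /\ (a < dims k)%nat /\ (b < dims (k - 1)%nat)%nat.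

Fixpoint partial_prod (dims : nat -> nat) (W : params) (k : nat) : nat -> nat -> R :=
  match k with
  | O => fun a b => if Nat.eqb a b then 1 else 0
  | S k' => fun a b =>
      fsum (dims k') (fun c => W (S k') a c * partial_prod dims W k' c b)
  end.

(* w_prod = (W_L ... W_1)^T in R^d ; since d_L = 1 it is row 0 of the product *)
Definition w_prod (L : nat) (dims : nat -> nat) (W : params) (j : nat) : R :=
  partial_prod dims W L 0%nat j.

Definition zdat (x : nat -> nat -> R) (y : nat -> R) (i j : nat) : R := y i * x i j.

Definition risk (l : R -> R) (n d L : nat) (dims : nat -> nat)
  (x : nat -> nat -> R) (y : nat -> R) (W : params) : R :=
  / INR n * fsum n (fun i => l (fsum d (fun j => w_prod L dims W j * zdat x y i j))).

Definition perturb (W : params) (k a b : nat) (s : R) : params :=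
  fun k' a' b' =>
    if (Nat.eqb k' k && Nat.eqb a' a && Nat.eqb b' b)%bool
    then W k' a' b' + s else W k' a' b'.

Definition is_gradient (L : nat) (dims : nat -> nat) (f : params -> R)
  (W G : params) : Prop :=
  forall k a b, valid_index L dims k a b ->
    derivable_pt_lim (fun s => f (perturb W k a b s)) 0 (G k a b).

(* derivative of g at t relative to the domain [0, +oo) (one-sided at t = 0) *)
Definition deriv_nonneg (g : R -> R) (t l : R) : Prop :=
  forall eps, 0 < eps -> exists delta, 0 < delta /\
    forall h, h <> 0 -> Rabs h < delta -> 0 <= t + h ->
      Rabs ((g (t + h) - g t) / h - l) < eps.

Definition cont_nonneg (g : R -> R) (t : R) : Prop :=
  forall eps, 0 < eps -> exists delta, 0 < delta /\
    forall s, 0 <= s -> Rabs (s - t) < delta -> Rabs (g s - g t) < eps.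

Definition frob (dims : nat -> nat) (W : params) (k : nat) : R :=
  sqrt (fsum (dims k) (fun a => fsum (dims (k - 1)%nat) (fun b => (W k a b) ^ 2))).

Definition in_ball (L : nat) (dims : nat -> nat) (Rad : R) (W : params) : Prop :=
  forall k, (1 <= k <= L)%nat -> frob dims W k <= Rad.

Fixpoint max_frob_upto (dims : nat -> nat) (W : params) (k : nat) : R :=
  match k with
  | O => 0
  | S O => frob dims W 1
  | S k' => Rmax (max_frob_upto dims W k') (frob dims W (S k'))
  end.

(* S has finite Lebesgue (outer) measure: it is covered by countably many
   closed intervals of finite total length. *)
Definition finite_lebesgue_measure (S : R -> Prop) : Prop :=
  exists (a b : nat -> R) (M : R),
    (forall m, a m <= b m) /\
    (forall t, S t -> exists m, a m <= t <= b m) /\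
    (forall N, fsum N (fun m => b m - a m) <= M).

(* Main.v *)
Require Import Defs.
From Stdlib Require Import Reals Lra Lia ZArith FunctionalExtensionality ClassicalEpsilon Classical.
Open Scope R_scope.

Lemma fsum_ext n f g : (forall i, (i < n)%nat -> f i = g i) -> fsum n f = fsum n g.
Proof. induction n; simpl; intros H; auto. rewrite IHn by (intros; apply H; lia). rewrite H by lia. auto. Qed.

Lemma fsum_plus n f g : fsum n (fun i => f i + g i) = fsum n f + fsum n g.
Proof. induction n; simpl. ring. rewrite IHn. ring. Qed.

Lemma fsum_scal n c f : fsum n (fun i => c * f i) = c * fsum n f.
Proof. induction n; simpl. ring. rewrite IHn. ring. Qed.

Lemma fsum_scalr n c f : fsum n (fun i => f i * c) = fsum n f * c.
Proof. induction n; simpl. ring. rewrite IHn. ring. Qed.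

Lemma fsum_opp n f : fsum n (fun i => - f i) = - fsum n f.
Proof. induction n; simpl. ring. rewrite IHn. ring. Qed.

Lemma fsum_zero n : fsum n (fun _ => 0) = 0.
Proof. induction n; simpl. ring. rewrite IHn. ring. Qed.

Lemma fsum_le n f g : (forall i, (i<n)%nat -> f i <= g i) -> fsum n f <= fsum n g.
Proof. induction n; cbn [fsum]; intros H. simpl; lra. assert (f n <= g n) by (apply H; lia).
  assert (fsum n f <= fsum n g) by (apply IHn; intros; apply H; lia). lra. Qed.

Lemma fsum_nonneg n f : (forall i, (i<n)%nat -> 0 <= f i) -> 0 <= fsum n f.
Proof. intros H. rewrite <- (fsum_zero n). apply fsum_le. auto. Qed.

Lemma fsum_const_le n f c : (forall i, (i<n)%nat -> f i <= c) -> fsum n f <= INR n * c.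
Proof. induction n; cbn [fsum]; intros H. simpl; lra. assert (f n <= c) by (apply H; lia).
  assert (fsum n f <= INR n * c) by (apply IHn; intros; apply H; lia).
  rewrite S_INR. lra. Qed.

Lemma fsum_const_ge n f c : (forall i, (i<n)%nat -> c <= f i) -> INR n * c <= fsum n f.
Proof. induction n; cbn [fsum]; intros H. simpl; lra. assert (c <= f n) by (apply H; lia).
  assert (INR n * c <= fsum n f) by (apply IHn; intros; apply H; lia).
  rewrite S_INR. lra. Qed.

Lemma fsum_term_le n f j : (forall i, (i<n)%nat -> 0 <= f i) -> (j<n)%nat -> f j <= fsum n f.
Proof. induction n; simpl; intros H Hj. lia.
  assert (0 <= fsum n f) by (apply fsum_nonneg; intros; apply H; lia).
  destruct (Nat.eq_dec j n). subst. lra.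
  assert (f j <= fsum n f) by (apply IHn; [intros; apply H; lia| lia]).
  assert (0 <= f n) by (apply H; lia). lra. Qed.

Lemma fsum_swap n m F : fsum n (fun i => fsum m (fun j => F i j)) = fsum m (fun j => fsum n (fun i => F i j)).
Proof. induction n; simpl. rewrite fsum_zero. auto. rewrite IHn, <- fsum_plus. auto. Qed.

Lemma fsum_delta n j f : fsum n (fun i => if Nat.eqb i j then f i else 0) = if Nat.ltb j n then f j else 0.
Proof. induction n; simpl. destruct j; auto. rewrite IHn.
  destruct (Nat.eqb n j) eqn:E.
  - apply Nat.eqb_eq in E; subst. replace (Nat.ltb j j) with false by (symmetry; apply Nat.ltb_ge; lia).
    replace (Nat.ltb j (S j)) with true by (symmetry; apply Nat.ltb_lt; lia). ring.
  - apply Nat.eqb_neq in E. destruct (Nat.ltb j n) eqn:E1.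
    + apply Nat.ltb_lt in E1. replace (Nat.ltb j (S n)) with true by (symmetry; apply Nat.ltb_lt; lia). ring.
    + apply Nat.ltb_ge in E1. replace (Nat.ltb j (S n)) with false by (symmetry; apply Nat.ltb_ge; lia). ring.
Qed.

Lemma fsum_shift n f : fsum (S n) f = f 0%nat + fsum n (fun i => f (S i)).
Proof. induction n. simpl. ring. cbn [fsum] in *. rewrite IHn. ring. Qed.

Lemma fsum_telescope n g : fsum n (fun i => g i - g (S i)) = g 0%nat - g n.
Proof. induction n; cbn [fsum]. ring. rewrite IHn. ring. Qed.

Lemma fsum_derive n (F : R -> nat -> R) D t :
  (forall i, (i<n)%nat -> derivable_pt_lim (fun s => F s i) t (D i)) ->
  derivable_pt_lim (fun s => fsum n (F s)) t (fsum n D).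
Proof. induction n; cbn [fsum]; intros H.
  - apply (derivable_pt_lim_const 0).
  - apply (derivable_pt_lim_plus (fun s => fsum n (F s)) (fun s => F s n)).
    apply IHn; intros; apply H; lia. apply H; lia. Qed.

Lemma quad_CS A B C : 0 <= B -> (forall lam, 0 <= A + 2*lam*C + lam*lam*B) -> C*C <= A*B.
Proof. intros HB H. destruct HB as [HB|HB].
  - pose (lam := - C / B). assert (lam * B = - C) by (unfold lam; field; lra).
    specialize (H lam). assert (0 <= A + lam * C) by nra. nra.
  - subst. destruct (Req_dec C 0). subst; lra.
    set (lam := -(A+1)/(2*C)). specialize (H lam). exfalso.
    assert (lam * C = -(A+1)/2) by (unfold lam; field; auto).
    replace (A + 2 * lam * C + lam * lam * 0) with (A + 2 * (lam * C)) in H by ring. rewrite H1 in H. lra.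
Qed.

Lemma CS n f g : (fsum n (fun i => f i * g i))^2 <= fsum n (fun i => f i ^2) * fsum n (fun i => g i ^2).
Proof. simpl. rewrite Rmult_1_r. apply quad_CS.
  apply fsum_nonneg; intros; apply pow2_ge_0.
  intros lam. assert (0 <= fsum n (fun i => (f i + lam * g i)^2)) by (apply fsum_nonneg; intros; apply pow2_ge_0).
  replace (fsum n (fun i => (f i + lam * g i)^2)) with
    (fsum n (fun i => f i ^2) + 2 * lam * fsum n (fun i => f i * g i) + lam * lam * fsum n (fun i => g i ^2)) in H.
  exact H. rewrite !Rmult_assoc, <- !fsum_scal, <- !fsum_plus. apply fsum_ext; intros; ring.
Qed.


Lemma mat_vec_CS m n A x : fsum m (fun c => (fsum n (fun j => A c j * x j))^2) <=
  fsum m (fun c => fsum n (fun j => A c j ^2)) * fsum n (fun j => x j^2).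
Proof. rewrite <- fsum_scalr. apply fsum_le; intros. apply CS. Qed.

Lemma mat_mat_CS p m q W M : fsum p (fun a => fsum q (fun b => (fsum m (fun c => W a c * M c b))^2)) <=
  fsum p (fun a => fsum m (fun c => W a c^2)) * fsum q (fun b => fsum m (fun c => M c b ^2)).
Proof. rewrite <- fsum_scalr. apply fsum_le; intros a _. rewrite <- fsum_scal. apply fsum_le; intros b _. apply CS. Qed.

Lemma fsum_single n f j : (forall i, (i<n)%nat -> i <> j -> f i = 0) -> (j<n)%nat -> fsum n f = f j.
Proof. induction n; cbn [fsum]; intros H Hj. lia.
  destruct (Nat.eq_dec j n). subst. rewrite (fsum_ext n f (fun _ => 0)), fsum_zero. ring.
  intros; apply H; lia.
  rewrite IHn; [ | intros; apply H; lia | lia]. rewrite (H n) by lia. ring. Qed.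

Lemma dlim_eq f t l1 l2 : derivable_pt_lim f t l1 -> l1 = l2 -> derivable_pt_lim f t l2.
Proof. intros; subst; auto. Qed.

Lemma dlim_mulc f t l c : derivable_pt_lim f t l -> derivable_pt_lim (fun s => f s * c) t (l * c).
Proof. intros H. eapply dlim_eq. apply (derivable_pt_lim_mult f (fun _ => c)). exact H.
  exact (derivable_pt_lim_const c t). simpl. ring. Qed.

Lemma dlim_cmul f t l c : derivable_pt_lim f t l -> derivable_pt_lim (fun s => c * f s) t (c * l).
Proof. intros H. exact (derivable_pt_lim_scal f c t l H). Qed.

Definition padd (D1 D2: params) : params := fun k a b => D1 k a b + D2 k a b.
Definition pscal c (D : params) : params := fun k a b => c * D k a b.
Definition psum m (F: nat -> params) : params := fun k a b => fsum m (fun i => F i k a b).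
Definition ue (k a b : nat) : params := fun k' a' b' =>
  if (Nat.eqb k' k && Nat.eqb a' a && Nat.eqb b' b)%bool then 1 else 0.

Section Net.
Variable dims : nat -> nat.

Fixpoint dpp (W D : params) (k : nat) : nat -> nat -> R :=
  match k with
  | O => fun _ _ => 0
  | S k' => fun a b => fsum (dims k') (fun c => D (S k') a c * partial_prod dims W k' c b + W (S k') a c * dpp W D k' c b)
  end.

Lemma pp_derive (C : R -> params) D t K :
  (forall k a c, (1 <= k <= K)%nat -> (a < dims k)%nat -> (c < dims (k-1))%nat ->
     derivable_pt_lim (fun s => C s k a c) t (D k a c)) ->
  forall a b, (a < dims K)%nat -> derivable_pt_lim (fun s => partial_prod dims (C s) K a b) t (dpp (C t) D K a b).
Proof.
  induction K; intros H a b Ha; simpl.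
  - exact (derivable_pt_lim_const _ t).
  - apply (fsum_derive _ (fun s c => C s (S K) a c * partial_prod dims (C s) K c b)). intros c Hc.
    apply (derivable_pt_lim_mult (fun s => C s (S K) a c) (fun s => partial_prod dims (C s) K c b)).
    apply H; [lia|auto|replace (S K - 1)%nat with K by lia; auto].
    apply IHK; auto. intros; apply H; auto; lia.
Qed.

Lemma dpp_add W D1 D2 K a b: dpp W (padd D1 D2) K a b = dpp W D1 K a b + dpp W D2 K a b.
Proof. revert a b; induction K; intros; simpl. ring. rewrite <- fsum_plus; apply fsum_ext; intros.
  rewrite IHK; unfold padd; ring. Qed.

Lemma dpp_scal W c D K a b: dpp W (pscal c D) K a b = c * dpp W D K a b.
Proof. revert a b; induction K; intros; simpl. ring. rewrite <- fsum_scal; apply fsum_ext; intros.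
  rewrite IHK; unfold pscal; ring. Qed.

Lemma dpp_zero W K a b: dpp W (fun _ _ _ => 0) K a b = 0.
Proof. revert a b; induction K; intros; simpl. ring.
  transitivity (fsum (dims K) (fun _ => 0)); [apply fsum_ext; intros | apply fsum_zero].
  rewrite IHK; ring. Qed.

Lemma dpp_psum W m F K a b : dpp W (psum m F) K a b = fsum m (fun i => dpp W (F i) K a b).
Proof. induction m. exact (dpp_zero W K a b).
  change (psum (S m) F) with (padd (psum m F) (F m)). rewrite dpp_add, IHm. reflexivity. Qed.

Definition agree K (D1 D2 : params) := forall k a b, (1<=k<=K)%nat -> (a<dims k)%nat -> (b<dims(k-1))%nat -> D1 k a b = D2 k a b.

Lemma dpp_agree W D1 D2 K : agree K D1 D2 -> forall a b, (a < dims K)%nat -> dpp W D1 K a b = dpp W D2 K a b.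
Proof. induction K; intros H a b Ha; simpl. auto. apply fsum_ext; intros c Hc.
  rewrite IHK; auto. rewrite H; auto. lia. replace (S K - 1)%nat with K by lia; auto.
  intros k a' b' ? ? ?; apply H; auto; lia. Qed.

End Net.

Lemma fsum_zero_ext n f : (forall i, (i<n)%nat -> f i = 0) -> fsum n f = 0.
Proof. intros H. rewrite (fsum_ext n f (fun _ => 0)) by auto. apply fsum_zero. Qed.

Section Risk.
Variables (n d : nat) (x : nat -> nat -> R) (y : nat -> R) (L : nat) (dims : nat -> nat) (l dl : R -> R).
Hypothesis HdL : dims L = 1%nat.
Hypothesis Hl_deriv : forall s, derivable_pt_lim l s (dl s).

Definition pval W i := fsum d (fun j => w_prod L dims W j * zdat x y i j).
Definition Lin W D := / INR n * fsum n (fun i => dl (pval W i) * fsum d (fun j => dpp dims W D L 0 j * zdat x y i j)).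
Definition rk := risk l n d L dims x y.

Lemma risk_derive (C : R -> params) D t :
  (forall k a c, valid_index L dims k a c -> derivable_pt_lim (fun s => C s k a c) t (D k a c)) ->
  derivable_pt_lim (fun s => rk (C s)) t (Lin (C t) D).
Proof. intros H. unfold rk, risk, Lin. apply dlim_cmul.
  apply (fsum_derive n (fun s i => l (pval (C s) i))). intros i Hi.
  apply (derivable_pt_lim_comp (fun s => pval (C s) i) l).
  - unfold pval. apply (fsum_derive d (fun s j => w_prod L dims (C s) j * zdat x y i j)). intros j Hj.
    apply dlim_mulc. unfold w_prod. apply pp_derive. intros; apply H; unfold valid_index; auto. rewrite HdL; lia.
  - apply Hl_deriv.
Qed.

Lemma Lin_add W D1 D2 : Lin W (padd D1 D2) = Lin W D1 + Lin W D2.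
Proof. unfold Lin. rewrite <- Rmult_plus_distr_l, <- fsum_plus. f_equal. apply fsum_ext; intros.
  rewrite <- Rmult_plus_distr_l, <- fsum_plus. f_equal. apply fsum_ext; intros. rewrite dpp_add. ring. Qed.

Lemma Lin_scal W c D : Lin W (pscal c D) = c * Lin W D.
Proof. unfold Lin.
  assert (E : fsum n (fun i => dl (pval W i) * fsum d (fun j => dpp dims W (pscal c D) L 0 j * zdat x y i j)) =
    c * fsum n (fun i => dl (pval W i) * fsum d (fun j => dpp dims W D L 0 j * zdat x y i j))).
  { rewrite <- fsum_scal. apply fsum_ext; intros.
    assert (E2 : fsum d (fun j => dpp dims W (pscal c D) L 0 j * zdat x y i j) = c * fsum d (fun j => dpp dims W D L 0 j * zdat x y i j)).
    { rewrite <- fsum_scal. apply fsum_ext; intros. rewrite dpp_scal. ring. }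
    rewrite E2. ring. }
  rewrite E. ring. Qed.

Lemma Lin_zero W : Lin W (fun _ _ _ => 0) = 0.
Proof. unfold Lin. rewrite fsum_zero_ext. ring. intros. rewrite fsum_zero_ext. ring. intros. rewrite dpp_zero. ring. Qed.

Lemma Lin_psum W m F : Lin W (psum m F) = fsum m (fun i => Lin W (F i)).
Proof. induction m. apply Lin_zero.
  change (psum (S m) F) with (padd (psum m F) (F m)). rewrite Lin_add, IHm. reflexivity. Qed.

Lemma Lin_agree W D1 D2 : agree dims L D1 D2 -> Lin W D1 = Lin W D2.
Proof. intros H. unfold Lin. f_equal. apply fsum_ext; intros. f_equal. apply fsum_ext; intros.
  rewrite (dpp_agree dims W D1 D2 L H); auto. rewrite HdL; lia. Qed.

Definition tsum (F : nat -> nat -> nat -> R) :=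
  fsum L (fun k0 => fsum (dims (S k0)) (fun a => fsum (dims k0) (fun b => F (S k0) a b))).

Lemma decomp D : agree dims L D (psum L (fun k0 => psum (dims (S k0)) (fun a => psum (dims k0) (fun b => pscal (D (S k0) a b) (ue (S k0) a b))))).
Proof. intros k a b Hk Ha Hb. unfold psum, pscal, ue.
  rewrite (fsum_single L _ (k-1)); [ | | lia].
  2:{ intros k0 _ Hne. apply fsum_zero_ext; intros. apply fsum_zero_ext; intros.
      replace (Nat.eqb k (S k0)) with false by (symmetry; apply Nat.eqb_neq; lia). simpl. ring. }
  replace (S (k-1)) with k by lia.
  rewrite (fsum_single _ _ a); [ | | auto].
  2:{ intros a' _ Hne. apply fsum_zero_ext; intros.
      replace (Nat.eqb a a') with false by (symmetry; apply Nat.eqb_neq; lia).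
      rewrite Nat.eqb_refl. simpl. ring. }
  rewrite (fsum_single _ _ b); [ | | auto].
  2:{ intros b' _ Hne. 
      replace (Nat.eqb b b') with false by (symmetry; apply Nat.eqb_neq; lia).
      rewrite !Nat.eqb_refl. simpl. ring. }
  rewrite !Nat.eqb_refl. simpl. ring.
Qed.

Lemma Lin_decomp W D : Lin W D = tsum (fun k a b => D k a b * Lin W (ue k a b)).
Proof. rewrite (Lin_agree _ _ _ (decomp D)). rewrite Lin_psum. unfold tsum. apply fsum_ext; intros.
  rewrite Lin_psum; apply fsum_ext; intros. rewrite Lin_psum; apply fsum_ext; intros. apply Lin_scal. Qed.

Lemma risk_partial W k a b : derivable_pt_lim (fun s => rk (perturb W k a b s)) 0 (Lin W (ue k a b)).
Proof. assert (E : perturb W k a b 0 = W).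
  { unfold perturb. extensionality k'. extensionality a'. extensionality b'.
    destruct (_ && _)%bool; ring. }
  eapply dlim_eq. apply (risk_derive (fun s => perturb W k a b s) (ue k a b)).
  intros k' a' c _. unfold perturb, ue. destruct (_ && _)%bool.
  - eapply dlim_eq. apply (derivable_pt_lim_plus (fun _ => W k' a' c) id). exact (derivable_pt_lim_const _ 0).
    apply derivable_pt_lim_id. ring.
  - exact (derivable_pt_lim_const _ 0).
  - rewrite E; auto.
Qed.

Lemma grad_eq W G : is_gradient L dims rk W G -> forall k a b, valid_index L dims k a b -> G k a b = Lin W (ue k a b).
Proof. intros H k a b Hv. apply (uniqueness_limite (fun s => rk (perturb W k a b s)) 0). apply H; auto.
  apply risk_partial. Qed.

End Risk.

Section Mt.
Variable dims : nat -> nat.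

Fixpoint mt (W : params) (k : nat) : nat -> nat -> R :=
  match k with
  | O => fun a b => if Nat.eqb a b then 1 else 0
  | S k' => match k' with
            | O => fun a b => if Nat.eqb a b then 1 else 0
            | S _ => fun a b => fsum (dims k') (fun c => W k a c * mt W k' c b)
            end
  end.

Lemma mt_step W k a b : (1 <= k)%nat -> mt W (S k) a b = fsum (dims k) (fun c => W (S k) a c * mt W k c b).
Proof. intros. destruct k. lia. reflexivity. Qed.

Lemma mt_one W a b : mt W 1 a b = if Nat.eqb a b then 1 else 0.
Proof. reflexivity. Qed.

Lemma pp_mt W k : (1 <= k)%nat -> forall a b, (a < dims k)%nat -> (b < dims 0)%nat ->
  partial_prod dims W k a b = fsum (dims 1) (fun c => mt W k a c * W 1%nat c b).
Proof. induction k; intros Hk a b Ha Hb. lia. destruct k.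
  - simpl. rewrite (fsum_single _ _ b); auto.
    rewrite (fsum_single _ _ a); auto. rewrite !Nat.eqb_refl. ring.
    intros i _ H. replace (Nat.eqb a i) with false by (symmetry; apply Nat.eqb_neq; lia). ring.
    intros i _ H. replace (Nat.eqb i b) with false by (symmetry; apply Nat.eqb_neq; lia). ring.
  - change (partial_prod dims W (S (S k)) a b) with
      (fsum (dims (S k)) (fun c => W (S (S k)) a c * partial_prod dims W (S k) c b)).
    rewrite (fsum_ext _ _ (fun c => fsum (dims 1) (fun e => W (S (S k)) a c * mt W (S k) c e * W 1%nat e b))).
    rewrite fsum_swap. apply fsum_ext; intros e _. rewrite mt_step by lia. rewrite <- fsum_scalr. auto.
    intros c Hc. rewrite IHk; auto; try lia. rewrite <- fsum_scal. apply fsum_ext; intros; ring.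
Qed.

Lemma dpp_ue1 W a' b' : (a' < dims 1)%nat -> (b' < dims 0)%nat -> forall k, (1 <= k)%nat -> forall a b,
  (a < dims k)%nat -> dpp dims W (ue 1 a' b') k a b = mt W k a a' * (if Nat.eqb b b' then 1 else 0).
Proof. intros Ha' Hb'. induction k; intros Hk a b Ha. lia. destruct k.
  - simpl. rewrite (fsum_single _ _ b'); auto. unfold ue. rewrite !Nat.eqb_refl.
    rewrite (Nat.eqb_sym b' b). simpl. destruct (Nat.eqb a a'); destruct (Nat.eqb b b'); simpl; ring.
    intros i _ H. unfold ue. replace (Nat.eqb i b') with false by (symmetry; apply Nat.eqb_neq; lia).
    rewrite Bool.andb_false_r. ring.
  - change (dpp dims W (ue 1 a' b') (S (S k)) a b) with
      (fsum (dims (S k)) (fun c => ue 1 a' b' (S (S k)) a c * partial_prod dims W (S k) c b + W (S (S k)) a c * dpp dims W (ue 1 a' b') (S k) c b)).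
    rewrite mt_step by lia. rewrite <- fsum_scalr. apply fsum_ext; intros c Hc.
    rewrite IHk; auto; try lia. unfold ue. simpl. ring.
Qed.

Definition F2 (M : nat -> nat -> R) p q := fsum p (fun a => fsum q (fun b => M a b ^2)).
Definition fr2 (W : params) k := fsum (dims k) (fun a => fsum (dims (k-1)) (fun b => (W k a b) ^ 2)).

Lemma fr2_nonneg W k : 0 <= fr2 W k.
Proof. apply fsum_nonneg; intros; apply fsum_nonneg; intros; apply pow2_ge_0. Qed.
Lemma F2_nonneg M p q : 0 <= F2 M p q.
Proof. apply fsum_nonneg; intros; apply fsum_nonneg; intros; apply pow2_ge_0. Qed.

Lemma mt_bound W Rad : forall k, (1 <= k)%nat -> (forall j, (2 <= j <= k)%nat -> fr2 W j <= Rad^2) ->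
  F2 (mt W k) (dims k) (dims 1) <= INR (dims 1) * (Rad^2)^(k-1).
Proof. induction k; intros Hk H. lia. destruct k.
  - unfold F2. simpl. rewrite Rmult_1_r. rewrite <- (Rmult_1_r (INR (dims 1))). apply fsum_const_le. intros a Ha.
    rewrite (fsum_single _ _ a); auto. rewrite Nat.eqb_refl. lra.
    intros i _ Hi. replace (Nat.eqb a i) with false by (symmetry; apply Nat.eqb_neq; lia). ring.
  - unfold F2. rewrite (fsum_ext _ _ (fun a => fsum (dims 1) (fun b => (fsum (dims (S k)) (fun c => W (S (S k)) a c * mt W (S k) c b))^2))).
    2:{ intros; apply fsum_ext; intros. rewrite mt_step by lia. auto. }
    eapply Rle_trans. apply mat_mat_CS.
    rewrite (fsum_swap (dims 1) (dims (S k)) (fun b c => mt W (S k) c b ^2)).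
    assert (H1 := IHk ltac:(lia) ltac:(intros; apply H; lia)). unfold F2 in H1.
    assert (H2 := H (S (S k)) ltac:(lia)). unfold fr2 in H2. replace (S (S k) - 1)%nat with (S k) in H2 by lia.
    assert (0 <= fsum (dims (S k)) (fun a => fsum (dims 1) (fun b => mt W (S k) a b ^2))) by apply (F2_nonneg (mt W (S k))).
    assert (0 <= fsum (dims (S (S k))) (fun a => fsum (dims (S k)) (fun c => W (S (S k)) a c ^2))) by apply (fr2_nonneg W (S (S k))).
    replace (S k - 1)%nat with k in H1 by lia. replace (S (S k) - 1)%nat with (S k) by lia.
    rewrite <- tech_pow_Rmult.
    assert (0 <= Rad^2) by apply pow2_ge_0.
    set (A := fsum (dims (S (S k))) (fun a => fsum (dims (S k)) (fun c => W (S (S k)) a c ^2))) in *.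
    set (B := fsum (dims (S k)) (fun a => fsum (dims 1) (fun b => mt W (S k) a b ^2))) in *.
    set (C := INR (dims 1) * (Rad^2)^k) in *.
    replace (INR (dims 1) * (Rad ^ 2 * (Rad ^ 2) ^ k)) with (Rad^2 * C) by (unfold C; ring).
    apply Rmult_le_compat; auto.
Qed.
End Mt.

Lemma finite_min n (f : nat -> R) : (forall i, (i<n)%nat -> f i > 0) -> exists g, 0 < g /\ forall i, (i<n)%nat -> g <= f i.
Proof. induction n; intros H. exists 1; split; [lra| intros; lia].
  destruct IHn as [g [Hg Hg2]]. intros; apply H; lia.
  assert (f n > 0) by (apply H; lia).
  exists (Rmin g (f n)). split. apply Rmin_pos; lra. intros i Hi.
  destruct (Nat.eq_dec i n). subst; apply Rmin_r. eapply Rle_trans. apply Rmin_l. apply Hg2; lia. Qed.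

Lemma frob_sq dims W k Rad : frob dims W k <= Rad -> fr2 dims W k <= Rad^2.
Proof. intros H. unfold frob in H. fold (fr2 dims W k) in H.
  rewrite <- (sqrt_sqrt (fr2 dims W k)) by apply fr2_nonneg.
  assert (0 <= sqrt (fr2 dims W k)) by apply sqrt_pos. simpl. nra. Qed.

Section Static.
Variables (n d : nat) (x : nat -> nat -> R) (y : nat -> R) (L : nat) (dims : nat -> nat) (l dl : R -> R) (u : nat -> R).
Hypothesis Hn : (0 < n)%nat.
Hypothesis Hxnorm : forall i, (i < n)%nat -> fsum d (fun j => (x i j) ^ 2) <= 1.
Hypothesis Hy : forall i, (i < n)%nat -> y i = 1 \/ y i = -1.
Hypothesis Hu1 : fsum d (fun j => (u j) ^ 2) = 1.
Hypothesis Hu2 : forall i, (i < n)%nat -> fsum d (fun j => u j * zdat x y i j) > 0.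
Hypothesis HL : (1 <= L)%nat.
Hypothesis Hd0 : dims 0%nat = d.
Hypothesis HdL : dims L = 1%nat.
Hypothesis Hl_deriv : forall s, derivable_pt_lim l s (dl s).
Hypothesis Hdl_cont : continuity dl.
Hypothesis Hdl_neg : forall s, dl s < 0.

Notation P := (pval d x y L dims).
Notation RK := (rk n d x y L dims l).

Lemma l_noninc a b : a <= b -> l b <= l a.
Proof. intros [H|H]. destruct (MVT_cor2 l dl a b H) as [c [E _]]. intros; apply Hl_deriv.
  assert (dl c < 0) by apply Hdl_neg. nra. subst; lra. Qed.

Lemma z_norm i : (i<n)%nat -> fsum d (fun j => zdat x y i j ^2) <= 1.
Proof. intros Hi. rewrite (fsum_ext _ _ (fun j => x i j ^2)). auto.
  intros; unfold zdat; destruct (Hy i Hi) as [E|E]; rewrite E; ring. Qed.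

Definition mvec W c := mt dims W L 0 c.
Definition qv W b := / INR n * fsum n (fun i => dl (P W i) * zdat x y i b).

Lemma grad1 W a b : (a < dims 1)%nat -> (b < d)%nat ->
  Lin n d x y L dims dl W (ue 1 a b) = mvec W a * qv W b.
Proof. intros Ha Hb. unfold Lin, qv.
  rewrite (fsum_ext n _ (fun i => mvec W a * (dl (P W i) * zdat x y i b))). rewrite fsum_scal. ring.
  intros i Hi. rewrite (fsum_single d _ b); auto.
  - rewrite (dpp_ue1 dims W a b Ha ltac:(rewrite Hd0; auto) L HL 0 b ltac:(rewrite HdL; lia)).
    rewrite Nat.eqb_refl. unfold mvec. ring.
  - intros j Hj Hne. rewrite (dpp_ue1 dims W a b Ha ltac:(rewrite Hd0; auto) L HL 0 j ltac:(rewrite HdL; lia)).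
    replace (Nat.eqb j b) with false by (symmetry; apply Nat.eqb_neq; lia). ring.
Qed.

Lemma pval_expr W i : P W i = fsum (dims 1) (fun c => mvec W c * fsum d (fun j => W 1%nat c j * zdat x y i j)).
Proof. unfold pval, w_prod.
  rewrite (fsum_ext d _ (fun j => fsum (dims 1) (fun c => mvec W c * (W 1%nat c j * zdat x y i j)))).
  rewrite fsum_swap. apply fsum_ext; intros. apply fsum_scal.
  intros j Hj. rewrite (pp_mt dims W L HL 0 j ltac:(rewrite HdL; lia) ltac:(rewrite Hd0; auto)).
  rewrite <- fsum_scalr. apply fsum_ext; intros. unfold mvec. ring.
Qed.

Definition msq W := fsum (dims 1) (fun c => mvec W c ^2).

Lemma msq_nonneg W : 0 <= msq W.
Proof. apply fsum_nonneg; intros; apply pow2_ge_0. Qed.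

Lemma m_norm_def W : F2 (mt dims W L) (dims L) (dims 1) = msq W.
Proof. rewrite HdL. unfold F2, msq, mvec. simpl. ring. Qed.

Lemma fr2_1 W : fr2 dims W 1 = fsum (dims 1) (fun a => fsum d (fun b => W 1%nat a b ^2)).
Proof. unfold fr2. replace (1-1)%nat with 0%nat by reflexivity. rewrite Hd0. auto. Qed.

Lemma pval_sq W i : (i<n)%nat -> (P W i)^2 <= msq W * fr2 dims W 1.
Proof. intros Hi. rewrite pval_expr. eapply Rle_trans. apply CS. apply Rmult_le_compat_l. apply msq_nonneg.
  eapply Rle_trans. apply mat_vec_CS. rewrite fr2_1. rewrite <- (Rmult_1_r (fsum _ _)) at 2.
  apply Rmult_le_compat_l. apply fsum_nonneg; intros; apply fsum_nonneg; intros; apply pow2_ge_0.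
  apply z_norm; auto. Qed.

Lemma static_bound Rad r : 0 < Rad -> r < l 0 -> exists eps, 0 < eps /\
  forall W, in_ball L dims Rad W -> RK W <= r ->
  forall G, is_gradient L dims RK W G -> frob dims G 1 >= eps.
Proof.
  intros HR Hr.
  destruct (Hl_deriv 0 1 Rlt_0_1) as [d0 Hd0'].
  set (K := Rabs (dl 0) + 1).
  assert (HK : 0 < K) by (unfold K; pose proof (Rabs_pos (dl 0)); lra).
  set (dlt := Rmin (d0/2) ((l 0 - r)/(2*K))).
  assert (Hdpos : 0 < dlt) by (unfold dlt; apply Rmin_pos; [pose proof (cond_pos d0); lra | apply Rdiv_lt_0_compat; lra]).
  assert (Hldl : r < l dlt).
  { assert (Hlt : Rabs dlt < d0) by (rewrite Rabs_pos_eq by lra; unfold dlt; pose proof (Rmin_l (d0/2) ((l 0 - r)/(2*K))); pose proof (cond_pos d0); lra).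
    specialize (Hd0' dlt ltac:(lra) Hlt). rewrite Rplus_0_l in Hd0'.
    apply Rabs_def2 in Hd0'. destruct Hd0' as [_ H2].
    assert (H3 : -K <= dl 0 - 1) by (unfold K; pose proof (Rle_abs (- dl 0)); rewrite Rabs_Ropp in H; lra).
    assert (H4 : (l dlt - l 0) / dlt > -K) by lra.
    assert (H5 : l dlt - l 0 > - K * dlt).
    { apply (Rmult_gt_compat_r dlt) in H4; auto. unfold Rdiv in H4. rewrite Rmult_assoc, Rinv_l in H4 by lra. lra. }
    assert (H6 : K * dlt <= (l 0 - r)/2).
    { unfold dlt. pose proof (Rmin_r (d0/2) ((l 0 - r)/(2*K))).
      apply (Rmult_le_compat_l K) in H; [|lra]. replace (K * ((l 0 - r) / (2 * K))) with ((l 0 - r)/2) in H by (field; lra). lra. }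
    lra. }
  set (Bsq := INR (dims 1) * (Rad^2)^(L-1) * Rad^2).
  destruct (continuity_ab_maj dl (-(1+Bsq)) (1+Bsq)) as [Mx [HMx _]].
  { assert (0 <= Bsq) by (unfold Bsq; apply Rmult_le_pos; [apply Rmult_le_pos; [apply pos_INR| apply pow_le; apply pow2_ge_0]| apply pow2_ge_0]). lra. }
  { intros; apply Hdl_cont. }
  set (kap := - dl Mx).
  assert (Hkap : 0 < kap) by (unfold kap; pose proof (Hdl_neg Mx); lra).
  destruct (finite_min n _ Hu2) as [gam [Hgam Hgam2]].
  exists (sqrt ((dlt^2/Rad^2) * (kap*gam)^2)). split.
  { apply sqrt_lt_R0. apply Rmult_lt_0_compat. apply Rdiv_lt_0_compat; apply pow_lt; lra. apply pow_lt. nra. }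
  intros W HW HrW G HG.
  assert (Hfr : forall k, (1 <= k <= L)%nat -> fr2 dims W k <= Rad^2) by (intros; apply frob_sq; apply HW; auto).
  assert (Hmsq : msq W <= INR (dims 1) * (Rad^2)^(L-1)).
  { rewrite <- m_norm_def. apply mt_bound; auto. intros; apply Hfr; lia. }
  assert (Hfr1 := Hfr 1%nat ltac:(lia)).
  assert (Hp : forall i, (i<n)%nat -> Rabs (P W i) <= 1 + Bsq).
  { intros i Hi. pose proof (pval_sq W i Hi).
    assert (msq W * fr2 dims W 1 <= Bsq).
    { unfold Bsq. apply Rmult_le_compat; auto. apply msq_nonneg. apply fr2_nonneg. }
    assert (P W i ^2 <= Bsq) by lra.
    destruct (Rle_dec 0 (P W i)); [rewrite Rabs_pos_eq by lra | rewrite Rabs_left by lra]; nra. }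
  assert (Hdli : forall i, (i<n)%nat -> dl (P W i) <= - kap).
  { intros i Hi. unfold kap. rewrite Ropp_involutive. apply HMx. pose proof (Hp i Hi).
    pose proof (Rle_abs (P W i)). pose proof (Rle_abs (- P W i)). rewrite Rabs_Ropp in H1. lra. }
  set (qs := fsum d (fun b => qv W b ^2)).
  assert (Hq : (kap*gam)^2 <= qs).
  { set (S := fsum d (fun b => u b * qv W b)).
    assert (ES : S = / INR n * fsum n (fun i => dl (P W i) * fsum d (fun b => u b * zdat x y i b))).
    { unfold S, qv. rewrite (fsum_ext d _ (fun b => / INR n * fsum n (fun i => dl (P W i) * (u b * zdat x y i b)))).
      rewrite fsum_scal, fsum_swap. f_equal. apply fsum_ext; intros. rewrite <- fsum_scal. apply fsum_ext; intros; ring.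
      intros b _. rewrite Rmult_comm, Rmult_assoc. rewrite <- fsum_scalr. f_equal. apply fsum_ext; intros; ring. }
    assert (HS : S <= - (kap * gam)).
    { rewrite ES. assert (0 < INR n) by (apply lt_0_INR; auto).
      assert (fsum n (fun i => dl (P W i) * fsum d (fun b => u b * zdat x y i b)) <= INR n * (-(kap*gam))).
      { apply fsum_const_le. intros i Hi. pose proof (Hdli i Hi). pose proof (Hgam2 i Hi). nra. }
      apply (Rmult_le_compat_l (/ INR n)) in H0. rewrite <- Rmult_assoc, Rinv_l in H0 by lra. lra.
      left; apply Rinv_0_lt_compat; auto. }
    pose proof (CS d u (qv W)). rewrite Hu1 in H. fold S in H. fold qs in H.
    assert (0 < kap * gam) by nra. nra. }
  assert (Hm : dlt^2 / Rad^2 <= msq W).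
  { destruct (classic (exists i, (i<n)%nat /\ P W i > dlt)) as [[i [Hi Hpi]]|Hno].
    - pose proof (pval_sq W i Hi).
      assert (dlt^2 <= msq W * Rad^2).
      { eapply Rle_trans; [|eapply Rle_trans; [apply H|]]. nra. apply Rmult_le_compat_l; auto. apply msq_nonneg. }
      apply (Rmult_le_reg_r (Rad^2)). apply pow_lt; lra. unfold Rdiv. rewrite Rmult_assoc, Rinv_l. lra.
      apply pow_nonzero; lra.
    - exfalso. assert (forall i, (i<n)%nat -> l dlt <= l (P W i)).
      { intros i Hi. apply l_noninc. destruct (Rle_dec (P W i) dlt); auto. exfalso; apply Hno; exists i; split; auto; lra. }
      assert (INR n * l dlt <= fsum n (fun i => l (P W i))) by (apply fsum_const_ge; auto).
      assert (0 < INR n) by (apply lt_0_INR; auto).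
      unfold rk, risk in HrW. fold P in HrW.
      apply (Rmult_le_compat_l (/ INR n)) in H0. rewrite <- Rmult_assoc, Rinv_l in H0 by lra.
      change (fsum n (fun i => l (fsum d (fun j => w_prod L dims W j * zdat x y i j)))) with (fsum n (fun i => l (P W i))) in HrW.
      lra. left; apply Rinv_0_lt_compat; auto. }
  apply Rle_ge. unfold frob. change (dims (1-1)%nat) with (dims 0%nat). rewrite Hd0.
  apply sqrt_le_1_alt.
  rewrite (fsum_ext (dims 1) _ (fun a => mvec W a ^2 * qs)).
  fold (msq W). unfold msq. rewrite fsum_scalr. fold (msq W).
  assert (0 <= (kap*gam)^2) by apply pow2_ge_0.
  assert (0 <= dlt^2/Rad^2) by (apply Rle_mult_inv_pos; [apply pow2_ge_0 | apply pow_lt; lra]).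
  apply Rmult_le_compat; auto.
  intros a Ha. unfold qs. rewrite <- fsum_scal. apply fsum_ext; intros b Hb.
  rewrite (grad_eq n d x y L dims l dl HdL Hl_deriv W G HG 1 a b).
  rewrite grad1; auto. ring.
  unfold valid_index. change (1-1)%nat with 0%nat. rewrite Hd0. repeat split; auto; lia.
Qed.

End Static.

Lemma nat_above x : exists N:nat, x < INR N.
Proof. destruct (archimed x) as [H1 _]. destruct (Z_le_gt_dec 0 (up x)).
  - exists (Z.to_nat (up x)). rewrite INR_IZR_INZ, Z2Nat.id; auto.
  - exists 0%nat. assert (up x <= -1)%Z by lia. apply IZR_le in H. simpl. lra. Qed.

Lemma nat_floor x : 0 <= x -> exists m, INR m <= x <= INR m + 1.
Proof. intros Hx. destruct (nat_above x) as [N HN]. revert HN; induction N; intros. simpl in HN; lra.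
  destruct (Rlt_dec x (INR N)). apply IHN; auto. exists N. rewrite S_INR in HN. lra. Qed.

Lemma noninc_gen g g' a b : (forall c, a <= c <= b -> derivable_pt_lim g c (g' c)) ->
  (forall c, a <= c <= b -> g' c <= 0) -> a <= b -> g b <= g a.
Proof. intros H1 H2 [H|H]. destruct (MVT_cor2 g g' a b H H1) as [c [E Hc]].
  assert (g' c <= 0) by (apply H2; lra). nra. subst; lra. Qed.

Lemma max_frob_ge dims W L k : (1 <= k <= L)%nat -> frob dims W k <= max_frob_upto dims W L.
Proof. induction L; intros Hk. lia. destruct L.
  - replace k with 1%nat by lia. simpl. lra.
  - change (max_frob_upto dims W (S (S L))) with (Rmax (max_frob_upto dims W (S L)) (frob dims W (S (S L)))).
    destruct (Nat.eq_dec k (S (S L))). subst. apply Rmax_r.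
    eapply Rle_trans. apply IHL. lia. apply Rmax_l. Qed.

Lemma fsum_const n c : fsum n (fun _ => c) = INR n * c.
Proof. induction n. simpl; ring. rewrite S_INR. cbn [fsum]. rewrite IHn. ring. Qed.

Section Flow.
Variables (n d : nat) (x : nat -> nat -> R) (y : nat -> R) (L : nat) (dims : nat -> nat) (l dl : R -> R) (u : nat -> R).
Hypothesis Hn : (0 < n)%nat.
Hypothesis Hxnorm : forall i, (i < n)%nat -> fsum d (fun j => (x i j) ^ 2) <= 1.
Hypothesis Hy : forall i, (i < n)%nat -> y i = 1 \/ y i = -1.
Hypothesis Hu1 : fsum d (fun j => (u j) ^ 2) = 1.
Hypothesis Hu2 : forall i, (i < n)%nat -> fsum d (fun j => u j * zdat x y i j) > 0.
Hypothesis HL : (1 <= L)%nat.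
Hypothesis Hd0 : dims 0%nat = d.
Hypothesis HdL : dims L = 1%nat.
Hypothesis Hl_deriv : forall s, derivable_pt_lim l s (dl s).
Hypothesis Hdl_cont : continuity dl.
Hypothesis Hdl_neg : forall s, dl s < 0.
Hypothesis Hl_pinf : forall eps, 0 < eps -> exists N, forall s, N < s -> Rabs (l s) < eps.
Variables (W V : R -> params).
Hypothesis HWderiv : forall t, 0 <= t -> forall k a b, valid_index L dims k a b ->
      deriv_nonneg (fun s => W s k a b) t (V t k a b).
Hypothesis Hflow : forall t, 0 <= t ->
      is_gradient L dims (risk l n d L dims x y) (W t) (fun k a b => - V t k a b).
Hypothesis Hinit_grad : forall G, is_gradient L dims (risk l n d L dims x y) (W 0) G ->
      exists k a b, valid_index L dims k a b /\ G k a b <> 0.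
Hypothesis Hinit_risk : risk l n d L dims x y (W 0) <= l 0.

Notation RK := (rk n d x y L dims l).

Definition Wext (s : R) : params := fun k a b =>
  if Rle_dec 0 s then W s k a b else W 0 k a b + s * V 0 k a b.
Definition rho s := RK (Wext s).
Definition Sq t := tsum L dims (fun k a b => V t k a b ^ 2).

Lemma Wext_eq t : 0 <= t -> Wext t = W t.
Proof. intros Ht. unfold Wext. extensionality k; extensionality a; extensionality b.
  destruct (Rle_dec 0 t); [auto | lra]. Qed.

Lemma rho_eq t : 0 <= t -> rho t = RK (W t).
Proof. intros; unfold rho; rewrite Wext_eq; auto. Qed.

Lemma Wext_deriv t k a b : 0 <= t -> valid_index L dims k a b ->
  derivable_pt_lim (fun s => Wext s k a b) t (V t k a b).
Proof. intros Ht Hv eps He. destruct (HWderiv t Ht k a b Hv eps He) as [dl0 [Hdl0 H]].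
  destruct Ht as [Ht|Ht].
  - assert (Hp : 0 < Rmin dl0 t) by (apply Rmin_pos; lra).
    exists (mkposreal _ Hp). simpl. intros h Hh Hlt. unfold Wext.
    pose proof (Rmin_l dl0 t). pose proof (Rmin_r dl0 t).
    pose proof (Rle_abs (-h)). rewrite Rabs_Ropp in H2.
    destruct (Rle_dec 0 (t+h)); [|lra]. destruct (Rle_dec 0 t); [|lra].
    apply H; auto; lra.
  - subst t. exists (mkposreal _ Hdl0). simpl. intros h Hh Hlt. unfold Wext.
    destruct (Rle_dec 0 0); [|lra]. destruct (Rle_dec 0 (0+h)).
    + apply H; auto.
    + replace ((W 0 k a b + (0 + h) * V 0 k a b - W 0 k a b) / h - V 0 k a b) with 0 by (field; auto).
      rewrite Rabs_R0; auto.
Qed.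

Lemma Lin_flow t k a b : 0 <= t -> valid_index L dims k a b ->
  Lin n d x y L dims dl (W t) (ue k a b) = - V t k a b.
Proof. intros Ht Hv. symmetry.
  apply (grad_eq n d x y L dims l dl HdL Hl_deriv (W t) (fun k a b => - V t k a b) (Hflow t Ht) k a b Hv). Qed.

Lemma tsum_valid F G : (forall k a b, valid_index L dims k a b -> F k a b = G k a b) -> tsum L dims F = tsum L dims G.
Proof. intros H. unfold tsum. apply fsum_ext; intros k0 Hk0. apply fsum_ext; intros a Ha. apply fsum_ext; intros b Hb.
  apply H. unfold valid_index. replace (S k0 - 1)%nat with k0 by lia. repeat split; auto; lia. Qed.

Lemma rho_deriv t : 0 <= t -> derivable_pt_lim rho t (- Sq t).
Proof. intros Ht. unfold rho. eapply dlim_eq.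
  apply (risk_derive n d x y L dims l dl HdL Hl_deriv Wext (V t) t). intros; apply Wext_deriv; auto.
  rewrite Wext_eq by auto. rewrite Lin_decomp.
  unfold Sq. rewrite (tsum_valid _ (fun k a b => - (V t k a b ^2))).
  unfold tsum. rewrite <- fsum_opp. apply fsum_ext; intros. rewrite <- fsum_opp. apply fsum_ext; intros.
  rewrite <- fsum_opp. auto.
  intros k a b Hv. rewrite Lin_flow; auto. ring. exact HdL.
Qed.

Lemma Sq_nonneg t : 0 <= Sq t.
Proof. unfold Sq, tsum. apply fsum_nonneg; intros; apply fsum_nonneg; intros; apply fsum_nonneg; intros; apply pow2_ge_0. Qed.

Lemma Sq_single t k a b : valid_index L dims k a b -> V t k a b ^2 <= Sq t.
Proof. intros [Hk [Ha Hb]]. destruct k as [|k0]. lia. replace (S k0 - 1)%nat with k0 in Hb by lia.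
  unfold Sq, tsum.
  eapply Rle_trans; [| apply (fsum_term_le L (fun k0 => fsum (dims (S k0)) (fun a => fsum (dims k0) (fun b => V t (S k0) a b ^ 2))) k0); [ | lia]].
  eapply Rle_trans; [| apply (fsum_term_le _ (fun a => fsum (dims k0) (fun b => V t (S k0) a b ^ 2)) a); auto].
  eapply Rle_trans; [| apply (fsum_term_le _ (fun b => V t (S k0) a b ^ 2) b); auto]. lra.
  intros; apply pow2_ge_0. intros; apply fsum_nonneg; intros; apply pow2_ge_0.
  intros; apply fsum_nonneg; intros; apply fsum_nonneg; intros; apply pow2_ge_0.
Qed.

Lemma Sq_layer1 t : fr2 dims (V t) 1 <= Sq t.
Proof. unfold Sq, tsum, fr2. change (1-1)%nat with 0%nat.
  apply (fsum_term_le L (fun k0 => fsum (dims (S k0)) (fun a => fsum (dims k0) (fun b => V t (S k0) a b ^ 2))) 0%nat).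
  intros; apply fsum_nonneg; intros; apply fsum_nonneg; intros; apply pow2_ge_0. lia. Qed.

Lemma rho_mono a b : 0 <= a -> a <= b -> rho b <= rho a.
Proof. intros Ha Hab. apply (noninc_gen rho (fun c => - Sq c)); auto.
  intros; apply rho_deriv; lra. intros; pose proof (Sq_nonneg c); lra. Qed.

Lemma rho_decr a b e : 0 <= a -> a <= b -> (forall c, a <= c <= b -> e <= Sq c) -> rho b <= rho a - e * (b - a).
Proof. intros Ha Hab He.
  assert (rho b + e * b <= rho a + e * a).
  { apply (noninc_gen (fun s => rho s + e * s) (fun c => - Sq c + e * 1)); auto.
    intros c Hc. apply (derivable_pt_lim_plus rho (fun s => e * s)). apply rho_deriv; lra.
    apply (derivable_pt_lim_scal id). apply derivable_pt_lim_id.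
    intros c Hc. pose proof (He c Hc). lra. }
  lra. Qed.

Lemma l_nonneg s : 0 <= l s.
Proof. destruct (Rle_dec 0 (l s)); auto. exfalso.
  destruct (Hl_pinf (- l s) ltac:(lra)) as [N HN].
  set (t := Rmax N s + 1). assert (N < t) by (unfold t; pose proof (Rmax_l N s); lra).
  assert (s <= t) by (unfold t; pose proof (Rmax_r N s); lra).
  specialize (HN t H). assert (l t <= l s) by (eapply l_noninc; eauto).
  pose proof (Rle_abs (- l t)). rewrite Rabs_Ropp in H2. lra. Qed.

Lemma RK_nonneg Wp : 0 <= RK Wp.
Proof. unfold rk, risk. apply Rmult_le_pos. left; apply Rinv_0_lt_compat; apply lt_0_INR; auto.
  apply fsum_nonneg; intros; apply l_nonneg. Qed.

Lemma rho_nonneg s : 0 <= rho s.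
Proof. apply RK_nonneg. Qed.

Lemma rho_strict : rho 1 < l 0.
Proof.
  assert (HS : 0 < Sq 0).
  { destruct (Hinit_grad (fun k a b => - V 0 k a b) (Hflow 0 ltac:(lra))) as [k [a [b [Hv Hne]]]].
    pose proof (Sq_single 0 k a b Hv). assert (V 0 k a b <> 0) by (intro E; apply Hne; rewrite E; ring).
    assert (0 < V 0 k a b ^2) by (simpl; rewrite Rmult_1_r; exact (Rsqr_pos_lt _ H0)). lra. }
  destruct (rho_deriv 0 (Rle_refl 0) (Sq 0 / 2) ltac:(lra)) as [dt Hdt].
  pose proof (cond_pos dt).
  set (h := Rmin (dt/2) 1).
  assert (Hh : 0 < h) by (unfold h; apply Rmin_pos; lra).
  assert (Hh1 : h <= 1) by apply Rmin_r.
  assert (Hh2 : h <= dt/2) by apply Rmin_l.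
  specialize (Hdt h ltac:(lra) ltac:(rewrite Rabs_pos_eq; lra)).
  rewrite Rplus_0_l in Hdt. apply Rabs_def2 in Hdt. destruct Hdt as [Hq _].
  assert (Hq2 : (rho h - rho 0) / h < 0) by lra.
  assert (rho h - rho 0 < 0).
  { apply (Rmult_lt_compat_r h) in Hq2; auto. unfold Rdiv in Hq2. rewrite Rmult_assoc, Rinv_l, Rmult_1_r, Rmult_0_l in Hq2; lra. }
  pose proof (rho_mono h 1 ltac:(lra) Hh1) as Hm. rewrite (rho_eq 0) in * by lra.
  unfold rk in *. lra.
Qed.

Lemma grad_lower Rad : 0 < Rad -> exists eps, 0 < eps /\ forall t, 1 <= t -> in_ball L dims Rad (W t) ->
  forall G, is_gradient L dims (risk l n d L dims x y) (W t) G -> frob dims G 1 >= eps.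
Proof. intros HR.
  destruct (static_bound n d x y L dims l dl u Hn Hxnorm Hy Hu1 Hu2 HL Hd0 HdL Hl_deriv Hdl_cont Hdl_neg Rad (rho 1) HR rho_strict)
    as [eps [He H]].
  exists eps; split; auto. intros t Ht Hb G HG. apply (H (W t)); auto.
  rewrite <- rho_eq by lra. apply rho_mono; lra. Qed.

Lemma Sq_lower Rad eps : (forall t, 1 <= t -> in_ball L dims Rad (W t) ->
  forall G, is_gradient L dims (risk l n d L dims x y) (W t) G -> frob dims G 1 >= eps) -> 0 < eps ->
  forall t, 1 <= t -> in_ball L dims Rad (W t) -> eps^2 <= Sq t.
Proof. intros H He t Ht Hb. pose proof (H t Ht Hb _ (Hflow t ltac:(lra))).
  unfold frob in H0. fold (fr2 dims (fun k a b => - V t k a b) 1) in H0.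
  assert (E : fr2 dims (fun k a b => - V t k a b) 1 = fr2 dims (V t) 1).
  { unfold fr2. apply fsum_ext; intros; apply fsum_ext; intros; ring. }
  rewrite E in H0. pose proof (Sq_layer1 t).
  assert (eps^2 <= fr2 dims (V t) 1).
  { rewrite <- (sqrt_sqrt (fr2 dims (V t) 1)) by apply fr2_nonneg. simpl. nra. }
  lra. Qed.

Lemma unbounded M : exists t, 0 <= t /\ M < max_frob_upto dims (W t) L.
Proof. destruct (classic (exists t, 0 <= t /\ M < max_frob_upto dims (W t) L)) as [H|H]; auto. exfalso.
  assert (HR : 0 < Rmax M 1) by (pose proof (Rmax_r M 1); lra).
  assert (Hb : forall t, 0 <= t -> in_ball L dims (Rmax M 1) (W t)).
  { intros t Ht k Hk. apply (Rle_trans _ (max_frob_upto dims (W t) L)). apply max_frob_ge; auto. eapply Rle_trans; [|apply Rmax_l].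
    destruct (Rle_dec (max_frob_upto dims (W t) L) M); auto. exfalso; apply H; exists t; split; auto; lra. }
  destruct (grad_lower (Rmax M 1) HR) as [eps [He Heps]].
  assert (He2 : 0 < eps^2) by (apply pow_lt; auto).
  pose proof (rho_nonneg 1).
  set (T := rho 1 / eps^2 + 1).
  assert (HT : 0 < T) by (unfold T; assert (0 <= rho 1 / eps^2) by (apply Rle_mult_inv_pos; auto); lra).
  pose proof (rho_decr 1 (1+T) (eps^2) ltac:(lra) ltac:(lra)) as Hd.
  assert (rho (1+T) <= rho 1 - eps^2 * (1 + T - 1)).
  { apply Hd. intros c Hc. apply (Sq_lower (Rmax M 1) eps); auto; try lra. apply Hb; lra. }
  assert (eps^2 * T = rho 1 + eps^2) by (unfold T; field; lra).
  pose proof (rho_nonneg (1+T)). replace (1 + T - 1) with T in * by ring. lra.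
Qed.

Lemma Wext_coord s k a b : 0 <= s -> Wext s k a b = W s k a b.
Proof. intros Hs. unfold Wext. destruct (Rle_dec 0 s); [auto|lra]. Qed.

Lemma hold_lam t1 t2 k a b lam : 0 <= t1 -> t1 <= t2 -> valid_index L dims k a b ->
  lam * (W t2 k a b - W t1 k a b) <= rho t1 - rho t2 + lam^2 * (t2 - t1) / 4.
Proof. intros H1 H12 Hv.
  assert (lam * Wext t2 k a b + rho t2 + (- (lam^2/4)) * t2 <= lam * Wext t1 k a b + rho t1 + (- (lam^2/4)) * t1).
  { apply (noninc_gen (fun s => lam * Wext s k a b + rho s + (- (lam^2/4)) * s)
      (fun c => (lam * V c k a b + - Sq c) + (- (lam^2/4)) * 1)); auto.
    - intros c Hc.
      apply (derivable_pt_lim_plus (fun s => lam * Wext s k a b + rho s) (fun s => (- (lam^2/4)) * s)).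
      apply (derivable_pt_lim_plus (fun s => lam * Wext s k a b) rho).
      apply dlim_cmul. apply Wext_deriv; auto; lra. apply rho_deriv; lra.
      apply (derivable_pt_lim_scal id). apply derivable_pt_lim_id.
    - intros c Hc. pose proof (Sq_single c k a b Hv). assert (0 <= (V c k a b - lam/2)^2) by apply pow2_ge_0. assert (E: (V c k a b - lam/2)^2 = V c k a b ^2 - lam * V c k a b + lam^2/4) by field. lra. }
  rewrite !Wext_coord in H by lra. lra. Qed.

Lemma hold_abs t1 t2 k a b eta : 0 <= t1 -> t1 <= t2 -> valid_index L dims k a b -> 0 < eta ->
  Rabs (W t2 k a b - W t1 k a b) <= eta * (rho t1 - rho t2) + (t2 - t1) / (4 * eta).
Proof. intros H1 H12 Hv He.
  assert (G : forall s, s = 1 \/ s = -1 -> s * (W t2 k a b - W t1 k a b) <= eta * (rho t1 - rho t2) + (t2 - t1) / (4 * eta)).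
  { intros sg Hsg. pose proof (hold_lam t1 t2 k a b (sg / eta) H1 H12 Hv) as Hl.
    apply (Rmult_le_compat_l eta) in Hl; [|lra].
    replace (eta * (sg / eta * (W t2 k a b - W t1 k a b))) with (sg * (W t2 k a b - W t1 k a b)) in Hl by (field; lra).
    replace (eta * (rho t1 - rho t2 + (sg / eta) ^ 2 * (t2 - t1) / 4)) with
      (eta * (rho t1 - rho t2) + (sg^2) * (t2 - t1) / (4 * eta)) in Hl by (field; lra).
    replace (sg^2) with 1 in Hl by (destruct Hsg; subst; ring). lra. }
  apply Rabs_le. pose proof (G 1 (or_introl eq_refl)). pose proof (G (-1) (or_intror eq_refl)). lra. Qed.

Lemma coord_close Rad : 0 < Rad -> exists h, 0 < h /\
  forall t s k a b, 0 <= t -> 0 <= s -> Rabs (s - t) <= h -> valid_index L dims k a b ->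
  Rabs (W s k a b - W t k a b) <= Rad / (fsum L (fun k0 => INR (dims (S k0)) * INR (dims k0)) + 1).
Proof. intros HR.
  set (N1 := fsum L (fun k0 => INR (dims (S k0)) * INR (dims k0)) + 1).
  assert (HN : 1 <= N1) by (unfold N1; assert (0 <= fsum L (fun k0 => INR (dims (S k0)) * INR (dims k0))) by
     (apply fsum_nonneg; intros; apply Rmult_le_pos; apply pos_INR); lra).
  set (d0 := Rad / N1). assert (Hd0p : 0 < d0) by (unfold d0; apply Rdiv_lt_0_compat; lra).
  pose proof (rho_nonneg 0) as Hr0.
  set (eta := d0 / (2 * (rho 0 + 1))). assert (He : 0 < eta) by (unfold eta; apply Rdiv_lt_0_compat; lra).
  exists (2 * eta * d0). split. nra.
  intros t s k a b Ht Hs Hts Hv. fold N1. fold d0.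
  assert (Hgen : forall t1 t2, 0 <= t1 -> t1 <= t2 -> t2 - t1 <= 2 * eta * d0 -> Rabs (W t2 k a b - W t1 k a b) <= d0).
  { intros t1 t2 Ht1 Ht12 Hh. eapply Rle_trans. apply (hold_abs t1 t2 k a b eta); auto.
    pose proof (rho_mono 0 t1 ltac:(lra) Ht1). pose proof (rho_nonneg t2).
    assert (eta * (rho t1 - rho t2) <= d0 / 2).
    { apply Rle_trans with (eta * (rho 0 + 1)). apply Rmult_le_compat_l; lra. unfold eta. right; field; lra. }
    assert ((t2 - t1) / (4 * eta) <= d0 / 2).
    { unfold Rdiv. apply Rle_trans with (2 * eta * d0 * / (4 * eta)). apply Rmult_le_compat_r; auto.
      left; apply Rinv_0_lt_compat; lra. right; field; lra. }
    lra. }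
  destruct (Rle_dec t s).
  - apply Hgen; auto. rewrite Rabs_pos_eq in Hts; lra.
  - rewrite Rabs_minus_sym. apply Hgen; auto; try lra. rewrite Rabs_minus_sym, Rabs_pos_eq in Hts; lra.
Qed.

Lemma ball_enlarge Rad : 0 < Rad -> exists h, 0 < h /\
  forall t s, 0 <= t -> in_ball L dims Rad (W t) -> 0 <= s -> Rabs (s - t) <= h -> in_ball L dims (2 * Rad) (W s).
Proof. intros HR. destruct (coord_close Rad HR) as [h [Hh Hc]]. exists h; split; auto.
  intros t s Ht Hb Hs Hts k Hk.
  set (N1 := fsum L (fun k0 => INR (dims (S k0)) * INR (dims k0)) + 1) in *.
  set (d0 := Rad / N1) in *.
  assert (HN0 : 0 <= fsum L (fun k0 => INR (dims (S k0)) * INR (dims k0))) by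
     (apply fsum_nonneg; intros; apply Rmult_le_pos; apply pos_INR).
  assert (HNk : INR (dims k) * INR (dims (k-1)) <= N1 - 1).
  { unfold N1. destruct k as [|k0]. lia. replace (S k0 - 1)%nat with k0 by lia.
    ring_simplify. apply (fsum_term_le L (fun k0 => INR (dims (S k0)) * INR (dims k0)) k0).
    intros; apply Rmult_le_pos; apply pos_INR. lia. }
  assert (Hd : INR (dims k) * INR (dims (k-1)) * d0^2 <= Rad^2).
  { assert (1 <= N1) by (unfold N1; lra). apply Rle_trans with (N1 * d0^2).
    apply Rmult_le_compat_r. apply pow2_ge_0. lra.
    unfold d0. replace (N1 * (Rad / N1)^2) with (Rad^2 / N1) by (field; lra).
    unfold Rdiv. rewrite <- (Rmult_1_r (Rad^2)) at 2. apply Rmult_le_compat_l. apply pow2_ge_0.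
    rewrite <- Rinv_1. apply Rinv_le_contravar; lra. }
  assert (Hf : fr2 dims (W s) k <= (2*Rad)^2).
  { pose proof (frob_sq dims (W t) k Rad (Hb k Hk)).
    apply Rle_trans with (fsum (dims k) (fun a => fsum (dims (k-1)) (fun b => 2 * (W t k a b)^2 + 2 * d0^2))).
    - apply fsum_le; intros a Ha. apply fsum_le; intros b Hbb.
      assert (Hv : valid_index L dims k a b) by (repeat split; auto; lia).
      pose proof (Hc t s k a b Ht Hs Hts Hv). fold N1 in H0. fold d0 in H0.
      assert ((W s k a b - W t k a b)^2 <= d0^2).
      { pose proof (Rabs_pos (W s k a b - W t k a b)). rewrite <- (pow2_abs (W s k a b - W t k a b)).
        apply pow_incr; lra. }
      assert (0 <= (2 * W t k a b - W s k a b)^2) by apply pow2_ge_0. nra.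
    - rewrite (fsum_ext _ _ (fun a => 2 * fsum (dims (k-1)) (fun b => W t k a b ^2) + INR (dims (k-1)) * (2 * d0^2))).
      rewrite fsum_plus, fsum_scal, fsum_const. fold (fr2 dims (W t) k). nra.
      intros. rewrite fsum_plus, fsum_scal, fsum_const. auto. }
  unfold frob. fold (fr2 dims (W s) k). rewrite <- (sqrt_pow2 (2*Rad)) by lra. apply sqrt_le_1_alt; auto.
Qed.

Lemma finite_meas Rad : 0 < Rad -> finite_lebesgue_measure (fun t => 0 <= t /\ in_ball L dims Rad (W t)).
Proof.
  intros HR.
  destruct (ball_enlarge Rad HR) as [h [Hh Hen]].
  destruct (grad_lower (2*Rad) ltac:(lra)) as [eps [He Heps]].
  set (c := eps^2). assert (Hc : 0 < c) by (unfold c; apply pow_lt; auto).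
  set (meets := fun m => exists t, (0 <= t /\ in_ball L dims Rad (W t)) /\ 1 + INR m * h <= t <= 1 + INR (S m) * h).
  assert (Hcell : forall m, meets m -> rho (1 + INR (S m) * h) <= rho (1 + INR m * h) - c * h).
  { intros m [t [[Ht Hb] Htm]]. rewrite S_INR in *.
    assert (0 <= INR m) by apply pos_INR.
    replace (c * h) with (c * (1 + (INR m + 1) * h - (1 + INR m * h))) by ring.
    apply rho_decr. nra. nra.
    intros s Hs. apply (Sq_lower (2*Rad) eps Heps He s). nra.
    apply (Hen t s Ht Hb). nra. apply Rabs_le; nra. }
  set (A := fun m => match m with O => 0 | S m' => 1 + INR m' * h end).
  set (B := fun m => match m with O => 1 | S m' => 1 + INR m' * h +
     (if excluded_middle_informative (meets m') then h else 0) end).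
  assert (Hr1 : 0 <= rho 1 / c) by (apply Rle_mult_inv_pos; auto; apply rho_nonneg).
  exists A, B, (1 + rho 1 / c). split; [|split].
  - intros m. destruct m; simpl. lra. destruct (excluded_middle_informative (meets m)); lra.
  - intros t [Ht Hb]. destruct (Rle_dec t 1). exists 0%nat; simpl; lra.
    destruct (nat_floor ((t-1)/h)) as [m [Hm1 Hm2]]. apply Rle_mult_inv_pos; lra.
    assert (E : t - 1 = ((t-1)/h) * h) by (field; lra).
    assert (H1 : INR m * h <= t - 1) by (rewrite E; apply Rmult_le_compat_r; lra).
    assert (H2 : t - 1 <= (INR m + 1) * h) by (rewrite E; apply Rmult_le_compat_r; lra).
    exists (S m). simpl. destruct (excluded_middle_informative (meets m)) as [Hy'|Hn'].
    + lra.
    + exfalso. apply Hn'. exists t. split. split; auto. rewrite S_INR. lra.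
  - intros N. destruct N. simpl. lra.
    rewrite fsum_shift. simpl (B 0%nat - A 0%nat).
    set (g := fun i => rho (1 + INR i * h) / c).
    assert (fsum N (fun i => B (S i) - A (S i)) <= fsum N (fun i => g i - g (S i))).
    { apply fsum_le. intros i Hi. simpl. unfold g.
      destruct (excluded_middle_informative (meets i)) as [Hm|Hm].
      + pose proof (Hcell i Hm).
        apply (Rmult_le_reg_r c); auto. replace ((rho (1 + INR i * h) / c - rho (1 + INR (S i) * h) / c) * c) with (rho (1 + INR i * h) - rho (1 + INR (S i) * h)) by (field; lra). lra.
      + assert (0 <= INR i) by apply pos_INR.
        pose proof (rho_mono (1 + INR i * h) (1 + INR (S i) * h) ltac:(nra) ltac:(rewrite S_INR; nra)).
        assert (0 <= (rho (1 + INR i * h) - rho (1 + INR (S i) * h)) / c) by (apply Rle_mult_inv_pos; lra).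
        unfold Rdiv in *. lra. }
    rewrite fsum_telescope in H. unfold g in H. simpl (INR 0) in H. rewrite Rmult_0_l, Rplus_0_r in H.
    assert (0 <= rho (1 + INR N * h) / c) by (apply Rle_mult_inv_pos; auto; apply rho_nonneg).
    lra.
Qed.

Lemma main_sec :
  (forall Rad, 0 < Rad -> exists eps, 0 < eps /\
     forall t, 1 <= t -> in_ball L dims Rad (W t) ->
       forall G, is_gradient L dims (risk l n d L dims x y) (W t) G ->
         frob dims G 1 >= eps)
  /\ (forall Rad, 0 < Rad ->
        finite_lebesgue_measure (fun t => 0 <= t /\ in_ball L dims Rad (W t)))
  /\ (forall M, exists t, 0 <= t /\ M < max_frob_upto dims (W t) L).
Proof. split; [|split]. apply grad_lower. apply finite_meas. apply unbounded. Qed.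

End Flow.

Theorem mainTheorem2
  (* data *)
  (n d : nat) (x : nat -> nat -> R) (y : nat -> R)
  (Hn : (0 < n)%nat)
  (Hxnorm : forall i, (i < n)%nat -> fsum d (fun j => (x i j) ^ 2) <= 1)
  (Hy : forall i, (i < n)%nat -> y i = 1 \/ y i = -1)
  (Hsep : exists u : nat -> R, fsum d (fun j => (u j) ^ 2) = 1 /\
            forall i, (i < n)%nat -> fsum d (fun j => u j * zdat x y i j) > 0)
  (* architecture *)
  (L : nat) (dims : nat -> nat)
  (HL : (1 <= L)%nat) (Hd0 : dims 0%nat = d) (HdL : dims L = 1%nat)
  (* Assumption 1 on the loss; dl is its derivative *)
  (l dl : R -> R)
  (Hl_deriv : forall s, derivable_pt_lim l s (dl s))
  (Hdl_cont : continuity dl)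
  (Hdl_neg : forall s, dl s < 0)
  (Hl_minf : forall M, exists N, forall s, s < N -> M < l s)
  (Hl_pinf : forall eps, 0 < eps -> exists N, forall s, N < s -> Rabs (l s) < eps)
  (* gradient flow: W is C^1 on [0,oo) with velocity V = - grad R(W) *)
  (W : R -> params) (V : R -> params)
  (HWderiv : forall t, 0 <= t -> forall k a b, valid_index L dims k a b ->
      deriv_nonneg (fun s => W s k a b) t (V t k a b))
  (HVcont : forall t, 0 <= t -> forall k a b, valid_index L dims k a b ->
      cont_nonneg (fun s => V s k a b) t)
  (Hflow : forall t, 0 <= t ->
      is_gradient L dims (risk l n d L dims x y) (W t) (fun k a b => - V t k a b))
  (* Assumption 2 *)
  (Hinit_grad : forall G, is_gradient L dims (risk l n d L dims x y) (W 0) G ->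
      exists k a b, valid_index L dims k a b /\ G k a b <> 0)
  (Hinit_risk : risk l n d L dims x y (W 0) <= l 0) :
  (forall Rad, 0 < Rad -> exists eps, 0 < eps /\
     forall t, 1 <= t -> in_ball L dims Rad (W t) ->
       forall G, is_gradient L dims (risk l n d L dims x y) (W t) G ->
         frob dims G 1 >= eps)
  /\ (forall Rad, 0 < Rad ->
        finite_lebesgue_measure (fun t => 0 <= t /\ in_ball L dims Rad (W t)))
  /\ (forall M, exists t, 0 <= t /\ M < max_frob_upto dims (W t) L).
Proof.
  destruct Hsep as [u [Hu1 Hu2]].
  exact (main_sec n d x y L dims l dl u Hn Hxnorm Hy Hu1 Hu2 HL Hd0 HdL Hl_deriv Hdl_cont Hdl_neg Hl_pinf
    W V HWderiv Hflow Hinit_grad Hinit_risk).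
Qed.
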